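(* Let $f(x,y)=-x^3e^y(x+e^y)$ and consider the constrained system $$\ddot x+\Big(\frac{1}{x+e^y}+\frac3x\Big)\dot x^2=0,\qquad \ddot y+\Big(\frac{e^y}{x+e^y}+1\Big)\dot y^2=0,\qquad f(x,y)\dot x\dot y=E_0\neq0,$$ i.e. the non-null geodesics of the metric $\gamma_{12}=\gamma_{21}=f$, $\gamma_{11}=\gamma_{22}=0$, with $\gamma_{ab}\dot q^a\dot q^b=2E_0$. Then $$I_1=x^6(x+e^y)^2\dot x^2+\frac{E_0}{2}x^4$$ is a first integral of this constrained system. Moreover, along any solution with $I_1=0$ one has $E_0<0$, the orbit is $y=\ln(c_1x^2-2x)$ for a constant $c_1$, and $t=\pm\sqrt{-2/E_0}\,\big(\tfrac{c_1}{4}x^4-\tfrac{x^3}{3}\big)+t_0$ for a constant $t_0$.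
   Context: A first integral of the constrained system is a function whose time derivative vanishes along every solution of the three displayed equations. The metric here is defined on the region where $f\neq0$. *)

(* Defs.v *)
From Stdlib Require Import Reals.
From Coquelicot Require Import Coquelicot.
Open Scope R_scope.

Definition fmet (x y : R) : R := - x ^ 3 * exp y * (x + exp y).

Definition I1 (E0 x y v : R) : R :=
  x ^ 6 * (x + exp y) ^ 2 * v ^ 2 + E0 / 2 * x ^ 4.

Definition time_interval (D : R -> Prop) : Prop :=
  (exists t, D t) /\
  (forall a b c, D a -> D c -> a <= b <= c -> D b) /\
  (forall t, D t -> exists eps, 0 < eps /\ forall s, Rabs (s - t) < eps -> D s).

Definition is_solution (E0 : R) (D : R -> Prop) (x y : R -> R) : Prop :=
  forall t, D t ->
    ex_derive x t /\ ex_derive (Derive x) t /\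
    ex_derive y t /\ ex_derive (Derive y) t /\
    fmet (x t) (y t) <> 0 /\
    Derive (Derive x) t
      + (/ (x t + exp (y t)) + 3 / x t) * (Derive x t) ^ 2 = 0 /\
    Derive (Derive y) t
      + (exp (y t) / (x t + exp (y t)) + 1) * (Derive y t) ^ 2 = 0 /\
    fmet (x t) (y t) * Derive x t * Derive y t = E0.

(* Main.v *)
Require Import Defs.
From Stdlib Require Import Reals Lra.
From Coquelicot Require Import Coquelicot.
Open Scope R_scope.

Lemma const_on (D : R -> Prop) (F : R -> R) :
  time_interval D -> (forall t, D t -> is_derive F t 0) ->
  forall a b, D a -> D b -> F a = F b.
Proof.
intros [_ [Hc _]] HF.
assert (K : forall a b, D a -> D b -> a <= b -> F a = F b).
{ intros a b Ha Hb Hab.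
  destruct (MVT_gen F a b (fun _ => 0)) as [c [_ Hc2]].
  - intros z Hz. apply HF. apply (Hc a z b); auto.
    rewrite Rmin_left, Rmax_right in Hz by lra. lra.
  - intros z Hz. rewrite Rmin_left, Rmax_right in Hz by lra.
    apply continuity_pt_filterlim. apply (ex_derive_continuous (K:=R_AbsRing) (V:=R_NormedModule)).
    eexists. apply HF. apply (Hc a z b); auto.
  - lra. }
intros a b Ha Hb. destruct (Rle_dec a b).
- auto.
- symmetry. apply K; auto; lra.
Qed.

Lemma fmet_nz X Y : fmet X Y <> 0 -> X <> 0 /\ X + exp Y <> 0.
Proof.
unfold fmet. intros H. split; intro E; apply H; rewrite E; ring.
Qed.

Theorem mainTheorem9 (E0 : R) (D : R -> Prop) (x y : R -> R) :
  E0 <> 0 -> time_interval D -> is_solution E0 D x y ->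
  (forall t, D t ->
     is_derive (fun s => I1 E0 (x s) (y s) (Derive x s)) t 0) /\
  ((forall t, D t -> I1 E0 (x t) (y t) (Derive x t) = 0) ->
     E0 < 0 /\
     exists c1 : R,
       (forall t, D t ->
          0 < c1 * x t ^ 2 - 2 * x t /\
          y t = ln (c1 * x t ^ 2 - 2 * x t)) /\
       exists (t0 sgn : R), (sgn = 1 \/ sgn = -1) /\
         forall t, D t ->
           t = sgn * sqrt (- 2 / E0) * (c1 / 4 * x t ^ 4 - x t ^ 3 / 3) + t0).
Proof.
intros HE HD Hs.
split.
{ intros t Ht. destruct (Hs t Ht) as (dx & ddx & dy & ddy & Hf & Ex & Ey & Ec).
  destruct (fmet_nz _ _ Hf) as [Hx Hu].
  unfold I1. auto_derive.
  - repeat split; auto.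
  - change (fun x0 => x x0) with x. change (fun x0 => y x0) with y.
    change (fun x0 => Derive x x0) with (Derive x).
    replace (Derive (Derive x) t) with (- (/ (x t + exp (y t)) + 3 / x t) * Derive x t ^ 2) by lra.
    rewrite <- Ec. unfold fmet. field. auto. }
intros HI.
destruct HD as [[ts Hts] HD'].
assert (Loc : forall t, D t -> x t <> 0 /\ x t + exp (y t) <> 0 /\ Derive x t <> 0 /\
   x t * exp (y t) * Derive y t = 2 * (x t + exp (y t)) * Derive x t /\
   (x t * (x t + exp (y t)) * Derive x t) ^ 2 = - E0 / 2).
{ intros t Ht. destruct (Hs t Ht) as (dx & ddx & dy & ddy & Hf & Ex & Ey & Ec).
  destruct (fmet_nz _ _ Hf) as [Hx Hu].
  assert (Hv : Derive x t <> 0).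
  { intro E. apply HE. rewrite <- Ec, E. ring. }
  pose proof (HI t Ht) as H1. unfold I1 in H1.
  assert (H4 : x t ^ 4 <> 0) by (apply pow_nonzero; auto).
  split; [|split; [|split; [|split]]]; auto.
  - assert (H2 : x t ^ 6 * (x t + exp (y t)) * Derive x t *
       (2 * (x t + exp (y t)) * Derive x t - x t * exp (y t) * Derive y t) = 0).
    { rewrite <- Ec in H1. unfold fmet in H1. lra. }
    apply Rmult_integral in H2. destruct H2 as [H2|H2]; [|lra].
    exfalso. apply Rmult_integral in H2. destruct H2 as [H2|H2]; [|auto].
    apply Rmult_integral in H2. destruct H2 as [H2|H2]; [|auto].
    apply (pow_nonzero (x t) 6); auto.
  - apply (Rmult_eq_reg_r (x t ^ 4)); auto.
    replace (- E0 / 2 * x t ^ 4) with (x t ^ 6 * (x t + exp (y t)) ^ 2 * Derive x t ^ 2) by lra.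
    ring. }
split.
{ destruct (Loc ts Hts) as (Hx & Hu & Hv & _ & H2).
  assert (0 < (x ts * (x ts + exp (y ts)) * Derive x ts) ^ 2).
  { apply pow2_gt_0. repeat apply Rmult_integral_contrapositive_currified; auto. }
  lra. }
set (G := fun s => (exp (y s) + 2 * x s) / x s ^ 2).
assert (HG : forall t, D t -> is_derive G t 0).
{ intros t Ht. destruct (Hs t Ht) as (dx & ddx & dy & ddy & _).
  destruct (Loc t Ht) as (Hx & Hu & Hv & Hr & _).
  assert (Hw : Derive y t = 2 * (x t + exp (y t)) * Derive x t / (x t * exp (y t))).
  { rewrite <- Hr. field. split; auto. apply Rgt_not_eq, exp_pos. }
  unfold G. auto_derive.
  - repeat split; auto; try (intro E; apply Hx; nra).
  - change (fun x0 => x x0) with x. change (fun x0 => y x0) with y.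
    rewrite Hw. field. split; auto. apply Rgt_not_eq, exp_pos. }
set (c1 := G ts).
assert (Hc : forall t, D t -> exp (y t) = c1 * x t ^ 2 - 2 * x t).
{ intros t Ht. pose proof (const_on D G (conj (ex_intro _ ts Hts) HD') HG t ts Ht Hts) as E.
  fold c1 in E. unfold G in E. destruct (Loc t Ht) as (Hx & _).
  rewrite <- E. field. auto. }
exists c1. split.
{ intros t Ht. rewrite <- Hc by auto. split. apply exp_pos. rewrite ln_exp. auto. }
set (h := fun s => x s * (x s + exp (y s)) * Derive x s).
assert (Hh : forall t, D t -> is_derive h t 0).
{ intros t Ht. destruct (Hs t Ht) as (dx & ddx & dy & ddy & Hf & Ex & Ey & Ec).
  destruct (Loc t Ht) as (Hx & Hu & Hv & Hr & _).
  assert (Hw : Derive y t = 2 * (x t + exp (y t)) * Derive x t / (x t * exp (y t))).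
  { rewrite <- Hr. field. split; auto. apply Rgt_not_eq, exp_pos. }
  unfold h. auto_derive.
  - repeat split; auto.
  - change (fun x0 => x x0) with x. change (fun x0 => y x0) with y.
    change (fun x0 => Derive x x0) with (Derive x).
    replace (Derive (Derive x) t) with (- (/ (x t + exp (y t)) + 3 / x t) * Derive x t ^ 2) by lra.
    rewrite Hw. field. split; auto. split; auto. apply Rgt_not_eq, exp_pos. }
set (k := sqrt (- E0 / 2)).
assert (HE2 : 0 < - E0 / 2).
{ destruct (Loc ts Hts) as (Hx & Hu & Hv & _ & H2).
  rewrite <- H2. apply pow2_gt_0. repeat apply Rmult_integral_contrapositive_currified; auto. }
assert (Hk : 0 < k) by (apply sqrt_lt_R0; auto).
assert (Hk2 : k * k = - E0 / 2) by (apply sqrt_sqrt; lra).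
assert (Hsq : sqrt (- 2 / E0) * k = 1).
{ unfold k. rewrite <- sqrt_mult_alt.
  - replace (- 2 / E0 * (- E0 / 2)) with 1 by (field; auto). apply sqrt_1.
  - assert (0 < - 2 / E0). { replace (-2/E0) with (/ (- E0 / 2)) by (field; auto).
      apply Rinv_0_lt_compat; auto. } lra. }
assert (Hhc : forall t, D t -> h t = h ts).
{ intros t Ht. exact (const_on D h (conj (ex_intro _ ts Hts) HD') Hh t ts Ht Hts). }
assert (Hhs : h ts * h ts = k * k).
{ rewrite Hk2. destruct (Loc ts Hts) as (_ & _ & _ & _ & H2). rewrite <- H2. unfold h. ring. }
assert (Hsg : exists sgn, (sgn = 1 \/ sgn = -1) /\ h ts = sgn * k).
{ assert ((h ts - k) * (h ts + k) = 0) by lra.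
  apply Rmult_integral in H. destruct H.
  - exists 1. split; auto. lra.
  - exists (-1). split; auto. lra. }
destruct Hsg as [sgn [Hsgn Hhk]].
set (T := fun s => s - sgn * sqrt (- 2 / E0) * (c1 / 4 * x s ^ 4 - x s ^ 3 / 3)).
assert (HT : forall t, D t -> is_derive T t 0).
{ intros t Ht. destruct (Hs t Ht) as (dx & _).
  pose proof (Hhc t Ht) as Eh. rewrite Hhk in Eh. unfold h in Eh.
  pose proof (Hc t Ht) as Ec1.
  unfold T. auto_derive; auto.
  change (fun x0 => x x0) with x.
  transitivity (1 - sgn * sqrt (-2/E0) * (x t * ((c1 * x t ^ 2 - 2 * x t) + x t) * Derive x t)).
  { field. }
  rewrite <- Ec1.
  replace (x t * (exp (y t) + x t) * Derive x t) with (sgn * k).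
  2:{ rewrite <- Eh. ring. }
  replace (1 - sgn * sqrt (-2 / E0) * (sgn * k)) with (1 - sgn * sgn * (sqrt (-2 / E0) * k)) by ring.
  rewrite Hsq. destruct Hsgn; subst; ring. }
exists (T ts), sgn. split; auto.
intros t Ht. rewrite <- (const_on D T (conj (ex_intro _ ts Hts) HD') HT t ts Ht Hts).
unfold T. ring.
Qed.
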